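(* Let $(A\otimes V,\mu_{A\otimes V})$ be a weak crossed product with preunit $\nu$ and associated morphisms $\psi_V^A,\sigma_V^A$, let $B$ be an algebra, and let $i_A:A\rightarrow B$ be an algebra morphism and $i_V:V\rightarrow B$ a morphism. The following are equivalent. (i) There exists a unique algebra morphism $\omega:A\times V\rightarrow B$ such that $\omega\circ p_{A\otimes V}\circ\beta_\nu=i_A$ and $\omega\circ p_{A\otimes V}\circ(\eta_A\otimes V)=i_V$. (ii) $\mu_B\circ(i_A\otimes i_V)\circ\nu=\eta_B$, $\mu_B\circ(i_A\otimes i_V)\circ\psi_V^A=\mu_B\circ(i_V\otimes i_A)$ and $\mu_B\circ(i_A\otimes i_V)\circ\sigma_V^A=\mu_B\circ(i_V\otimes i_V)$.
   Context: $\mathcal C$ is a strict monoidal category with tensor product $\otimes$ and unit object $K$ in which every idempotent splits: for every $\nabla:Y\rightarrow Y$ with $\nabla\circ\nabla=\nabla$ there are an object $Z$ and morphisms $i:Z\rightarrow Y$, $p:Y\rightarrow Z$ with $\nabla=i\circ p$, $p\circ i=id_Z$ ($Z$ is the image of $\nabla$, $i$ the injection, $p$ the projection). We write $A\otimes f$ for $id_A\otimes f$. An algebra $A$ has unit $\eta_A$ and product $\mu_A$. Weak crossed products. Let $A$ be an algebra and $V$ an object, and let $\psi_V^A:V\otimes A\rightarrow A\otimes V$ satisfy $(\mu_A\otimes V)\circ(A\otimes\psi_V^A)\circ(\psi_V^A\otimes A)=\psi_V^A\circ(V\otimes\mu_A)$. Then $\nabla_{A\otimes V}=(\mu_A\otimes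 V)\circ(A\otimes\psi_V^A)\circ(A\otimes V\otimes\eta_A)$ is idempotent; $A\times V$ denotes its image, with injection $i_{A\otimes V}$ and projection $p_{A\otimes V}$. Let $\sigma_V^A:V\otimes V\rightarrow A\otimes V$ with $\nabla_{A\otimes V}\circ\sigma_V^A=\sigma_V^A$. The twisted condition is $(\mu_A\otimes V)\circ(A\otimes\psi_V^A)\circ(\sigma_V^A\otimes A)=(\mu_A\otimes V)\circ(A\otimes\sigma_V^A)\circ(\psi_V^A\otimes V)\circ(V\otimes\psi_V^A)$ and the cocycle condition is $(\mu_A\otimes V)\circ(A\otimes\sigma_V^A)\circ(\sigma_V^A\otimes V)=(\mu_A\otimes V)\circ(A\otimes\sigma_V^A)\circ(\psi_V^A\otimes V)\circ(V\otimes\sigma_V^A)$. Put $\mu_{A\otimes V}=(\mu_A\otimes V)\circ(\mu_A\otimes\sigma_V^A)\circ(A\otimes\psi_V^A\otimes V)$. If the twisted and cocycle conditions hold, $(A\otimes V,\mu_{A\otimes V})$ is called a weak crossed product. For $\nu:K\rightarrow A\otimes V$ put $\beta_\nu=(\mu_A\otimes V)\circ(A\otimes\nu)$. A weak crossed product with preunit $\nu$ is a weak crossed product such that $(\mu_A\otimes V)\circ(A\otimes\sigma_V^A)\circ(\psi_V^A\otimes V)\circ(V\otimes\nu)=\nabla_{A\otimes V}\circ(\eta_A\otimes V)$, $(\mu_A\otimes V)\circ(A\otimes\sigma_V^A)\circ(\nu\otimes V)=\nabla_{A\otimes V}\circ(\eta_A\otimes V)$ and $(\mu_A\otimes V)\circ(A\otimes\psi_V^A)\circ(\nu\otimes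 A)=\beta_\nu$. Then $A\times V$ is an algebra with product $\mu_{A\times V}=p_{A\otimes V}\circ\mu_{A\otimes V}\circ(i_{A\otimes V}\otimes i_{A\otimes V})$ and unit $p_{A\otimes V}\circ\nu$. *)

(* Defs.v *)
Set Implicit Arguments.
Unset Strict Implicit.

Record Cat := {
  Ob :> Type;
  Hom : Ob -> Ob -> Type;
  comp : forall {a b c : Ob}, Hom b c -> Hom a b -> Hom a c;
  idm : forall (a : Ob), Hom a a;
  comp_assoc : forall a b c d (f : Hom c d) (g : Hom b c) (h : Hom a b),
      comp f (comp g h) = comp (comp f g) h;
  comp_id_l : forall a b (f : Hom a b), comp (idm b) f = f;
  comp_id_r : forall a b (f : Hom a b), comp f (idm a) = f
}.
Arguments Hom {_} _ _.
Arguments comp {_ a b c} _ _ : rename.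
Arguments idm {_} _.

Definition eqcast {C : Cat} {x y : Ob C} (e : x = y) : Hom x y :=
  match e in _ = z return Hom x z with eq_refl => idm x end.

(** Strict monoidal categories: the tensor product is associative and unital
    on the nose on objects (Leibniz equality), and the (identity) associativity
    and unit constraints are natural; coherence is automatic since all
    constraint morphisms are identity casts. *)
Record SMCat := {
  smcat :> Cat;
  tens : Ob smcat -> Ob smcat -> Ob smcat;
  tensm : forall {a b c d : Ob smcat}, Hom a b -> Hom c d -> Hom (tens a c) (tens b d);
  unit : Ob smcat;
  tens_assoc : forall a b c, tens (tens a b) c = tens a (tens b c);
  tens_unit_l : forall a, tens unit a = a;
  tens_unit_r : forall a, tens a unit = a;
  tensm_id : forall a b, tensm (idm a) (idm b) = idm (tens a b);
  tensm_comp : forall a b c a' b' c' (f : Hom b c) (g : Hom a b)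
      (f' : Hom b' c') (g' : Hom a' b'),
      tensm (comp f g) (comp f' g') = comp (tensm f f') (tensm g g');
  tensm_assoc : forall a b c a' b' c' (f : Hom a a') (g : Hom b b') (h : Hom c c'),
      comp (eqcast (tens_assoc a' b' c')) (tensm (tensm f g) h)
      = comp (tensm f (tensm g h)) (eqcast (tens_assoc a b c));
  tensm_unit_l : forall a b (f : Hom a b),
      comp (eqcast (tens_unit_l b)) (tensm (idm unit) f) = comp f (eqcast (tens_unit_l a));
  tensm_unit_r : forall a b (f : Hom a b),
      comp (eqcast (tens_unit_r b)) (tensm f (idm unit)) = comp f (eqcast (tens_unit_r a))
}.
Arguments tens {s} _ _.
Arguments tensm {s a b c d} _ _.
Arguments unit {s}.

Section Defs.
Variable C : SMCat.

Local Notation "f \o g" := (comp f g) (at level 40, left associativity).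
Local Notation "x ⊗ y" := (tens x y) (at level 35, right associativity).
Local Notation "f ⊗m g" := (tensm f g) (at level 35, right associativity).

Definition asc (x y z : Ob C) : Hom (tens (tens x y) z) (tens x (tens y z)) :=
  eqcast (tens_assoc x y z).
Definition asci (x y z : Ob C) : Hom (tens x (tens y z)) (tens (tens x y) z) :=
  eqcast (eq_sym (tens_assoc x y z)).
Definition lunit_i (x : Ob C) : Hom x (tens unit x) := eqcast (eq_sym (tens_unit_l x)).
Definition runit_i (x : Ob C) : Hom x (tens x unit) := eqcast (eq_sym (tens_unit_r x)).
Definition lunit (x : Ob C) : Hom (tens unit x) x := eqcast (tens_unit_l x).
Definition runit (x : Ob C) : Hom (tens x unit) x := eqcast (tens_unit_r x).

Definition is_algebra (A : Ob C) (eta : Hom unit A) (mu : Hom (tens A A) A) : Prop :=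
  mu \o (mu ⊗m idm A) = mu \o (idm A ⊗m mu) \o asc A A A /\
  mu \o (eta ⊗m idm A) = lunit A /\
  mu \o (idm A ⊗m eta) = runit A.

Definition is_alg_morphism (A : Ob C) (etaA : Hom unit A) (muA : Hom (tens A A) A)
  (B : Ob C) (etaB : Hom unit B) (muB : Hom (tens B B) B) (f : Hom A B) : Prop :=
  f \o etaA = etaB /\ f \o muA = muB \o (f ⊗m f).

Section WCP.
Variables (A V : Ob C) (etaA : Hom unit A) (muA : Hom (tens A A) A).

(** ∇_{A⊗V} = (μ_A⊗V)∘(A⊗ψ)∘(A⊗V⊗η_A) *)
Definition nabla (psi : Hom (tens V A) (tens A V)) : Hom (tens A V) (tens A V) :=
  (muA ⊗m idm V) \o asci A A V \o (idm A ⊗m psi) \o asc A V A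
    \o (idm (tens A V) ⊗m etaA) \o runit_i (tens A V).

(** β_ν = (μ_A⊗V)∘(A⊗ν) *)
Definition beta_nu (nu : Hom unit (tens A V)) : Hom A (tens A V) :=
  (muA ⊗m idm V) \o asci A A V \o (idm A ⊗m nu) \o runit_i A.

(** μ_{A⊗V} = (μ_A⊗V)∘(μ_A⊗σ)∘(A⊗ψ⊗V) *)
Definition mu_AV (psi : Hom (tens V A) (tens A V)) (sigma : Hom (tens V V) (tens A V))
  : Hom (tens (tens A V) (tens A V)) (tens A V) :=
  (muA ⊗m idm V) \o asci A A V \o (muA ⊗m sigma) \o asci A A (tens V V)
   \o (idm A ⊗m asc A V V) \o asc A (tens A V) V \o ((idm A ⊗m psi) ⊗m idm V)
   \o asci A (tens V A) V \o (idm A ⊗m asci V A V) \o asc A V (tens A V).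

Definition psi_condition (psi : Hom (tens V A) (tens A V)) : Prop :=
  (muA ⊗m idm V) \o asci A A V \o (idm A ⊗m psi) \o asc A V A \o (psi ⊗m idm A)
  = psi \o (idm V ⊗m muA) \o asc V A A.

Definition twisted_condition psi sigma : Prop :=
  (muA ⊗m idm V) \o asci A A V \o (idm A ⊗m psi) \o asc A V A \o (sigma ⊗m idm A)
  = (muA ⊗m idm V) \o asci A A V \o (idm A ⊗m sigma) \o asc A V V \o (psi ⊗m idm V)
     \o asci V A V \o (idm V ⊗m psi) \o asc V V A.

Definition cocycle_condition psi (sigma : Hom (tens V V) (tens A V)) : Prop :=
  (muA ⊗m idm V) \o asci A A V \o (idm A ⊗m sigma) \o asc A V V \o (sigma ⊗m idm V)
  = (muA ⊗m idm V) \o asci A A V \o (idm A ⊗m sigma) \o asc A V V \o (psi ⊗m idm V)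
     \o asci V A V \o (idm V ⊗m sigma) \o asc V V V.

Definition weak_crossed_product psi sigma : Prop :=
  is_algebra etaA muA /\ psi_condition psi /\ nabla psi \o sigma = sigma /\
  twisted_condition psi sigma /\ cocycle_condition psi sigma.

Definition wcp_preunit psi sigma (nu : Hom unit (tens A V)) : Prop :=
  weak_crossed_product psi sigma /\
  (muA ⊗m idm V) \o asci A A V \o (idm A ⊗m sigma) \o asc A V V \o (psi ⊗m idm V)
     \o asci V A V \o (idm V ⊗m nu) \o runit_i V
   = nabla psi \o (etaA ⊗m idm V) \o lunit_i V /\
  (muA ⊗m idm V) \o asci A A V \o (idm A ⊗m sigma) \o asc A V V \o (nu ⊗m idm V)
     \o lunit_i V
   = nabla psi \o (etaA ⊗m idm V) \o lunit_i V /\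
  (muA ⊗m idm V) \o asci A A V \o (idm A ⊗m psi) \o asc A V A \o (nu ⊗m idm A)
     \o lunit_i A
   = beta_nu nu.

End WCP.

Definition splits (Y Z : Ob C) (e : Hom Y Y) (i : Hom Z Y) (p : Hom Y Z) : Prop :=
  e = i \o p /\ p \o i = idm Z.

Definition idempotents_split : Prop :=
  forall (Y : Ob C) (e : Hom Y Y), e \o e = e ->
    exists (Z : Ob C) (i : Hom Z Y) (p : Hom Y Z), splits e i p.

End Defs.

(* Main.v *)
Require Import Defs.
From Stdlib Require Import List ProofIrrelevance.
Import ListNotations.
Set Implicit Arguments.

Section Cast.
Context {C : Cat}.
Lemma ec_pi (x y : Ob C) (e1 e2 : x = y) : eqcast e1 = eqcast e2.
Proof. rewrite (proof_irrelevance _ e1 e2); reflexivity. Qed.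
Lemma ec_id (x : Ob C) (e : x = x) : eqcast e = idm x.
Proof. rewrite (proof_irrelevance _ e eq_refl); reflexivity. Qed.
Lemma ec_comp (x y z : Ob C) (e1 : x = y) (e2 : y = z) :
  comp (eqcast e2) (eqcast e1) = eqcast (eq_trans e1 e2).
Proof. destruct e2, e1; simpl; apply comp_id_l. Qed.
Lemma ec_comp_l (w x y z : Ob C) (e1 : x = y) (e2 : y = z) (f : Hom z w) :
  comp (comp f (eqcast e2)) (eqcast e1) = comp f (eqcast (eq_trans e1 e2)).
Proof. rewrite <- comp_assoc, ec_comp; reflexivity. Qed.
Lemma congr_comp (a b c : Ob C) (f f' : Hom b c) (g g' : Hom a b) :
  f = f' -> g = g' -> comp f g = comp f' g'.
Proof. intros; subst; reflexivity. Qed.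
End Cast.

Ltac cnorm := repeat (first [rewrite comp_assoc | rewrite ec_comp_l |
  rewrite ec_comp | rewrite ec_id | rewrite comp_id_l | rewrite comp_id_r]).
Ltac cfin := repeat first [reflexivity | apply ec_pi | apply congr_comp].

Section Tm.
Context {C : SMCat}.

Fixpoint tensL (l : list (Ob C)) : Ob C :=
  match l with nil => unit | x :: l' =>
    match l' with nil => x | _ :: _ => tens x (tensL l') end end.

Lemma tensL_app l1 l2 : tensL (l1 ++ l2) = tens (tensL l1) (tensL l2).
Proof.
  induction l1 as [|x l1 IH].
  - symmetry; apply tens_unit_l.
  - destruct l1 as [|y l1'].
    + simpl. destruct l2; [symmetry; apply tens_unit_r | reflexivity].
    + change (tens x (tensL ((y :: l1') ++ l2)) = tens (tens x (tensL (y :: l1'))) (tensL l2)).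
      rewrite IH; symmetry; apply tens_assoc.
Qed.

Definition Hm (l m : list (Ob C)) := Hom (tensL l) (tensL m).

Definition tm0 {l1 m1 l2 m2} (f : Hm l1 m1) (g : Hm l2 m2) : Hm (l1 ++ l2) (m1 ++ m2) :=
  comp (eqcast (eq_sym (tensL_app m1 m2))) (comp (tensm f g) (eqcast (tensL_app l1 l2))).
Lemma tmkey : Datatypes.unit. Proof. exact Datatypes.tt. Qed.
Definition tm {l1 m1 l2 m2} (f : Hm l1 m1) (g : Hm l2 m2) : Hm (l1 ++ l2) (m1 ++ m2) :=
  match tmkey with Datatypes.tt => tm0 f g end.
Lemma tm_def {l1 m1 l2 m2} (f : Hm l1 m1) (g : Hm l2 m2) : tm f g = tm0 f g.
Proof. unfold tm; destruct tmkey; reflexivity. Qed.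

Lemma tensm_split_l (a b c a' b' : Ob C) (f : Hom b c) (g : Hom a b) (h : Hom a' b') :
  tensm (comp f g) h = comp (tensm f h) (tensm g (idm a')).
Proof. rewrite <- tensm_comp, comp_id_r; reflexivity. Qed.
Lemma tensm_split_r (a b c a' b' : Ob C) (f : Hom a' b') (g : Hom b c) (h : Hom a b) :
  tensm f (comp g h) = comp (tensm f g) (tensm (idm a') h).
Proof. rewrite <- tensm_comp, comp_id_r; reflexivity. Qed.
Lemma tensm_sand_l (a b c d a' b' : Ob C) (f : Hom c d) (x : Hom b c) (g : Hom a b) (h : Hom a' b') :
  tensm (comp f (comp x g)) h = comp (tensm f (idm b')) (comp (tensm x h) (tensm g (idm a'))).
Proof. rewrite <- !tensm_comp, comp_id_l, comp_id_r; reflexivity. Qed.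
Lemma tensm_sand_r (a b c d a' b' : Ob C) (f : Hom c d) (x : Hom b c) (g : Hom a b) (h : Hom a' b') :
  tensm h (comp f (comp x g)) = comp (tensm (idm b') f) (comp (tensm h x) (tensm (idm a') g)).
Proof. rewrite <- !tensm_comp, comp_id_l, comp_id_r; reflexivity. Qed.
Lemma tensm_ec_l (x y z : Ob C) (e : x = y) :
  tensm (eqcast e) (idm z) = eqcast (f_equal (fun t => tens t z) e).
Proof. destruct e; simpl; apply tensm_id. Qed.
Lemma tensm_ec_r (x y z : Ob C) (e : x = y) :
  tensm (idm z) (eqcast e) = eqcast (f_equal (fun t => tens z t) e).
Proof. destruct e; simpl; apply tensm_id. Qed.
Lemma tensm_assoc' (a b c a' b' c' : Ob C) (f : Hom a a') (g : Hom b b') (h : Hom c c') :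
  tensm (tensm f g) h = comp (eqcast (eq_sym (tens_assoc a' b' c')))
     (comp (tensm f (tensm g h)) (eqcast (tens_assoc a b c))).
Proof.
  rewrite <- tensm_assoc, comp_assoc, ec_comp, ec_id, comp_id_l; reflexivity.
Qed.

Lemma tm_comp l1 m1 n1 l2 m2 n2 (f : Hm m1 n1) (g : Hm m2 n2) (f' : Hm l1 m1) (g' : Hm l2 m2) :
  comp (tm f g) (tm f' g') = tm (comp f f') (comp g g').
Proof.
  rewrite ?tm_def; unfold tm0. rewrite tensm_comp. cnorm. cfin.
Qed.

Lemma tm_id l1 l2 : tm (idm (tensL l1)) (idm (tensL l2)) = idm (tensL (l1 ++ l2)).
Proof. rewrite ?tm_def; unfold tm0; rewrite tensm_id; cnorm. reflexivity. Qed.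

Lemma tm_assoc l1 l2 l3 m1 m2 m3 (f : Hm l1 m1) (g : Hm l2 m2) (h : Hm l3 m3) :
  tm (tm f g) h = comp (eqcast (f_equal tensL (app_assoc m1 m2 m3)))
    (comp (tm f (tm g h)) (eqcast (f_equal tensL (eq_sym (app_assoc l1 l2 l3))))).
Proof.
  rewrite ?tm_def; unfold tm0. rewrite !tensm_sand_l, !tensm_sand_r, !tensm_ec_l, !tensm_ec_r.
  rewrite tensm_assoc'. cnorm. cfin.
Qed.

Lemma tm_assoc_r l1 l2 l3 m1 m2 m3 (f : Hm l1 m1) (g : Hm l2 m2) (h : Hm l3 m3) :
  tm f (tm g h) = comp (eqcast (f_equal tensL (eq_sym (app_assoc m1 m2 m3))))
    (comp (tm (tm f g) h) (eqcast (f_equal tensL (app_assoc l1 l2 l3)))).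
Proof. rewrite tm_assoc. cnorm. cfin. Qed.

Lemma tm_nil_l l m (f : Hm l m) : @tm [] [] l m (idm unit) f = f.
Proof.
  rewrite ?tm_def; unfold tm0.
  rewrite (ec_pi (eq_sym (tensL_app [] m)) (tens_unit_l (tensL m))).
  rewrite comp_assoc, tensm_unit_l. cnorm. reflexivity.
Qed.

Lemma tm_nil_r l m (f : Hm l m) : @tm l m [] [] f (idm unit) =
  comp (eqcast (f_equal tensL (eq_sym (app_nil_r m))))
   (comp f (eqcast (f_equal tensL (app_nil_r l)))).
Proof.
  rewrite ?tm_def; unfold tm0.
  transitivity (comp (eqcast (f_equal tensL (eq_sym (app_nil_r m))))
    (comp (comp (eqcast (tens_unit_r (tensL m))) (tensm f (idm unit))) (eqcast (tensL_app l [])))).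
  { cnorm. cfin. }
  rewrite tensm_unit_r. cnorm. cfin.
Qed.

Lemma tm_single (x y z w : Ob C) (f : Hom x y) (g : Hom z w) :
  @tm [x] [y] [z] [w] f g = tensm f g.
Proof. rewrite ?tm_def; unfold tm0. cnorm. reflexivity. Qed.

Lemma tm_split1 l1 m1 l2 m2 (f : Hm l1 m1) (g : Hm l2 m2) :
  tm f g = comp (tm f (idm (tensL m2))) (tm (idm (tensL l1)) g).
Proof. rewrite tm_comp, comp_id_l, comp_id_r; reflexivity. Qed.
Lemma tm_split2 l1 m1 l2 m2 (f : Hm l1 m1) (g : Hm l2 m2) :
  tm f g = comp (tm (idm (tensL m1)) g) (tm f (idm (tensL l2))).
Proof. rewrite tm_comp, comp_id_l, comp_id_r; reflexivity. Qed.

End Tm.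
Arguments tm_assoc {C l1 l2 l3 m1 m2 m3} f g h.
Arguments tm_assoc_r {C l1 l2 l3 m1 m2 m3} f g h.
Arguments tm_comp {C l1 m1 n1 l2 m2 n2} f g f' g'.
Arguments tm_nil_l {C l m} f.
Arguments tm_nil_r {C l m} f.
Arguments tm_split1 {C l1 m1 l2 m2} f g.
Arguments tm_split2 {C l1 m1 l2 m2} f g.
Lemma tm_dist_l {C : SMCat} {l m n l2 m2 : list C} (f : Hm m n) (g : Hm l m) (h : Hm l2 m2) :
  tm (comp f g) h = comp (tm f (idm (tensL m2))) (tm g h).
Proof. rewrite tm_comp, comp_id_l; reflexivity. Qed.
Lemma tm_dist_r {C : SMCat} {l m n l1 m1 : list C} (f : Hm m n) (g : Hm l m) (h : Hm l1 m1) :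
  tm h (comp f g) = comp (tm (idm (tensL m1)) f) (tm h g).
Proof. rewrite tm_comp, comp_id_l; reflexivity. Qed.

From Stdlib Require Import ssreflect.

Lemma pref2 (C : Cat) (a b c d : Ob C) (f1 : Hom b c) (f2 : Hom a b) (g : Hom a c) :
  comp f1 f2 = g -> forall (x : Hom c d), comp (comp x f1) f2 = comp x g.
Proof. intros H x; rewrite -comp_assoc H; reflexivity. Qed.
Lemma pref3 (C : Cat) (a b c e d : Ob C) (f1 : Hom e c) (f2 : Hom b e) (f3 : Hom a b) (g : Hom a c) :
  comp (comp f1 f2) f3 = g -> forall (x : Hom c d), comp (comp (comp x f1) f2) f3 = comp x g.
Proof. intros H x; rewrite -!comp_assoc -H !comp_assoc; reflexivity. Qed.
Lemma pref4 (C : Cat) (a b c e e' d : Ob C) (f1 : Hom e c) (f2 : Hom e' e) (f3 : Hom b e') (f4 : Hom a b) (g : Hom a c) :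
  comp (comp (comp f1 f2) f3) f4 = g -> forall (x : Hom c d), comp (comp (comp (comp x f1) f2) f3) f4 = comp x g.
Proof. intros H x; rewrite -!comp_assoc -H !comp_assoc; reflexivity. Qed.
Lemma pref5 (C : Cat) (a b c e e' e'' d : Ob C) (f1 : Hom e c) (f2 : Hom e' e) (f3 : Hom e'' e') (f4 : Hom b e'') (f5 : Hom a b) (g : Hom a c) :
  comp (comp (comp (comp f1 f2) f3) f4) f5 = g -> forall (x : Hom c d), comp (comp (comp (comp (comp x f1) f2) f3) f4) f5 = comp x g.
Proof. intros H x; rewrite -!comp_assoc -H !comp_assoc; reflexivity. Qed.

Arguments pref2 {C a b c d f1 f2 g} H x.
Arguments pref3 {C a b c e d f1 f2 f3 g} H x.
Arguments pref4 {C a b c e e' d f1 f2 f3 f4 g} H x.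
Arguments pref5 {C a b c e e' e'' d f1 f2 f3 f4 f5 g} H x.
(* rewrite with an equation whose LHS is a (left-nested) chain, anywhere in a left-nested chain *)
Ltac rw0 H := repeat rewrite comp_assoc;
  first [ rewrite (pref5 H) | rewrite (pref4 H) | rewrite (pref3 H) | rewrite (pref2 H) | rewrite H ];
  repeat rewrite comp_assoc.
Ltac rw H := let H' := fresh in pose proof H as H'; repeat rewrite comp_assoc in H'; cbv [app] in H'; rw0 H'; clear H'.
Ltac rwl H := let H' := fresh in pose proof (eq_sym H) as H'; repeat rewrite comp_assoc in H'; cbv [app] in H'; rw0 H'; clear H'.

Ltac clc := repeat (first [rewrite ec_id | rewrite comp_id_l | rewrite comp_id_r | rewrite comp_assoc]); cbv [app].

Ltac transl H X := unfold psi_condition, twisted_condition, cocycle_condition in H;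
  lazymatch type of H with ?oL = ?oR => transitivity (comp oL X);
  [ rewrite ?tm_def; unfold tm0, asc, asci, runit_i, lunit_i, runit, lunit; cnorm; cfin
  | rewrite H; rewrite ?tm_def; unfold tm0, asc, asci, runit_i, lunit_i, runit, lunit; cnorm; cfin ] end.

Ltac nth_prefix t k := lazymatch k with 0 => t | S ?k' => lazymatch t with comp ?p _ => nth_prefix p k' end end.
Ltac lhs := lazymatch goal with |- ?L = _ => L end.
Ltac factor k := let L := lhs in let S := nth_prefix L k in
  lazymatch S with comp _ ?F => F | _ => S end.
Ltac mg k := let L := lhs in let S := nth_prefix L k in
   lazymatch S with
   | comp (comp ?x (@tm _ ?m1 ?n1 ?m2 ?n2 ?f ?g)) (@tm _ ?l1 _ ?l2 _ ?f' ?g') =>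
       let HH := fresh in pose proof (@tm_comp _ l1 m1 n1 l2 m2 n2 f g f' g') as HH;
       cbv [app] in HH; rewrite (pref2 HH); clear HH
   | comp (@tm _ ?m1 ?n1 ?m2 ?n2 ?f ?g) (@tm _ ?l1 _ ?l2 _ ?f' ?g') =>
       rewrite (@tm_comp _ l1 m1 n1 l2 m2 n2 f g f' g')
   end; clc.
Ltac sp1 k := let F := factor k in lazymatch F with @tm _ ?a ?b ?c ?d ?f ?g => rewrite (@tm_split1 _ a b c d f g) end; clc.
Ltac sp2 k := let F := factor k in lazymatch F with @tm _ ?a ?b ?c ?d ?f ?g => rewrite (@tm_split2 _ a b c d f g) end; clc.
Ltac tal k := let F := factor k in lazymatch F with
  @tm _ _ _ ?l3 ?m3 (@tm _ ?l1 ?m1 ?l2 ?m2 ?f ?g) ?h => rewrite (@tm_assoc _ l1 l2 l3 m1 m2 m3 f g h) end; clc.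
Ltac tar k := let F := factor k in lazymatch F with
  @tm _ ?l1 ?m1 _ _ ?f (@tm _ ?l2 ?m2 ?l3 ?m3 ?g ?h) => rewrite (@tm_assoc_r _ l1 l2 l3 m1 m2 m3 f g h) end; clc.

Ltac dl k := let F := factor k in lazymatch F with
  @tm _ ?l ?n ?l2 ?m2 (@comp _ _ _ _ ?f ?g) ?h => rewrite (@tm_dist_l _ l _ n l2 m2 f g h) end; clc.
Ltac dr k := let F := factor k in lazymatch F with
  @tm _ ?l1 ?m1 ?l ?n ?h (@comp _ _ _ _ ?f ?g) => rewrite (@tm_dist_r _ l _ n l1 m1 f g h) end; clc.

Definition Nk {C : SMCat} {A V : Ob C} (etaA : Hom unit A) (muA : Hom (tens A A) A)
  (psi : Hom (tens V A) (tens A V)) := match tmkey with Datatypes.tt => nabla etaA muA psi end.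
Lemma Nk_eq {C : SMCat} {A V : Ob C} (etaA : Hom unit A) (muA : Hom (tens A A) A)
  (psi : Hom (tens V A) (tens A V)) : Nk etaA muA psi = nabla etaA muA psi.
Proof. unfold Nk; destruct tmkey; reflexivity. Qed.

Section Main.
Context (C : SMCat) (A V : Ob C) (etaA : Hom unit A) (muA : Hom (tens A A) A)
  (psi : Hom (tens V A) (tens A V)) (sigma : Hom (tens V V) (tens A V))
  (nu : Hom unit (tens A V)).
Context (Hwcp : wcp_preunit etaA muA psi sigma nu).

Local Notation I l := (idm (tensL l)).
Let mu : Hm [A;A] [A] := muA.
Let et : Hm [] [A] := etaA.
Let ps : Hm [V;A] [A;V] := psi.
Let sg : Hm [V;V] [A;V] := sigma.
Let nu' : Hm [] [A;V] := nu.
Let N : Hm [A;V] [A;V] := Nk etaA muA psi.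
Local Notation "f ⊗m g" := (tensm f g) (at level 35, right associativity).
Local Notation "f \o g" := (comp f g) (at level 40, left associativity).

Lemma HN : N = tm mu (I [V]) \o tm (I [A]) ps \o @tm _ [A;V] [A;V] [] [A] (I [A;V]) et.
Proof. unfold N; rewrite Nk_eq; unfold nabla; rewrite ?tm_def; unfold tm0, asc, asci, runit_i; cnorm; cfin. Qed.

Lemma Hbeta : beta_nu muA nu = tm mu (I [V]) \o @tm _ [A] [A] [] [A;V] (I [A]) nu'.
Proof. unfold beta_nu; rewrite ?tm_def; unfold tm0, asc, asci, runit_i; cnorm; cfin. Qed.

Lemma HalgA : mu \o tm mu (I [A]) = mu \o tm (I [A]) mu /\
  mu \o @tm _ [] [A] [A] [A] et (I [A]) = I [A] /\ mu \o @tm _ [A] [A] [] [A] (I [A]) et = I [A].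
Proof.
  destruct Hwcp as [[[H1 [H2 H3]] _] _].
  split; [|split].
  - transl H1 (asci A A A).
  - transl H2 (lunit_i A).
  - transl H3 (runit_i A).
Qed.

Definition HA_as := proj1 HalgA.
Definition HA_ul := proj1 (proj2 HalgA).
Definition HA_ur := proj2 (proj2 HalgA).

Lemma Hpsi : tm mu (I [V]) \o tm (I [A]) ps \o tm ps (I [A]) = ps \o tm (I [V]) mu.
Proof. destruct Hwcp as [[_ [H _]] _]. transl H (asci V A A). Qed.

Lemma Htw : tm mu (I [V]) \o tm (I [A]) ps \o tm sg (I [A]) =
  tm mu (I [V]) \o tm (I [A]) sg \o tm ps (I [V]) \o tm (I [V]) ps.
Proof. destruct Hwcp as [[_ [_ [_ [H _]]]] _]. transl H (asci V V A). Qed.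

Lemma Hcoc : tm mu (I [V]) \o tm (I [A]) sg \o tm sg (I [V]) =
  tm mu (I [V]) \o tm (I [A]) sg \o tm ps (I [V]) \o tm (I [V]) sg.
Proof. destruct Hwcp as [[_ [_ [_ [_ H]]]] _]. transl H (asci V V V). Qed.

Lemma HNs : N \o sg = sg.
Proof. destruct Hwcp as [[_ [_ [H _]]] _]. unfold N; rewrite Nk_eq. exact H. Qed.

Lemma Hpre1 : tm mu (I [V]) \o tm (I [A]) sg \o tm ps (I [V]) \o @tm _ [V] [V] [] [A;V] (I [V]) nu'
  = N \o @tm _ [] [A] [V] [V] et (I [V]).
Proof. destruct Hwcp as [_ [H _]]. unfold N; rewrite Nk_eq. transl H (idm V). Qed.

Lemma Hpre2 : tm mu (I [V]) \o tm (I [A]) sg \o @tm _ [] [A;V] [V] [V] nu' (I [V])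
  = N \o @tm _ [] [A] [V] [V] et (I [V]).
Proof. destruct Hwcp as [_ [_ [H _]]]. unfold N; rewrite Nk_eq. transl H (idm V). Qed.

Lemma Hpre3 : tm mu (I [V]) \o tm (I [A]) ps \o @tm _ [] [A;V] [A] [A] nu' (I [A])
  = tm mu (I [V]) \o @tm _ [A] [A] [] [A;V] (I [A]) nu'.
Proof. destruct Hwcp as [_ [_ [_ H]]]. rewrite -Hbeta. transl H (idm A). Qed.

Lemma NE : N \o @tm _ [] [A] [V] [V] et (I [V]) = ps \o @tm _ [V] [V] [] [A] (I [V]) et.
Proof.
  rewrite HN -{1}(tm_id [A] [V]) (tm_assoc (I [A]) (I [V]) et); clc.
  mg 0. mg 0.
  sp1 0. rewrite tm_nil_l -(tm_id [A] [V]); clc. tar 2.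
  mg 2. rewrite HA_ul tm_id; clc. reflexivity.
Qed.

Local Notation M := (tm mu (I [V])).

Lemma L1' : M \o tm (I [A]) (N \o @tm _ [] [A] [V] [V] et (I [V])) = N.
Proof.
  rewrite NE HN. dr 0. symmetry. rewrite -(tm_id [A] [V]). tal 0. reflexivity.
Qed.

Lemma SS0 : tm mu sg = tm (I [A]) sg \o tm M (I [V]).
Proof. symmetry. tal 0. rewrite tm_id. mg 0. reflexivity. Qed.

Lemma SS2 : M \o tm mu (I [A;V]) = M \o tm (I [A]) M.
Proof.
  rewrite -(tm_id [A] [V]). tar 0. mg 0. rw HA_as. dl 0. tal 0. reflexivity.
Qed.

Lemma SS3 : M \o tm mu sg = M \o tm (I [A]) (M \o tm (I [A]) sg).
Proof.
  sp1 0. rw SS2. rewrite -(tm_id [A] [A]). tal 0. mg 0. reflexivity.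
Qed.

Lemma P1 : M \o tm (I [A]) ps \o tm (ps \o @tm _ [V] [V] [] [A] (I [V]) et) (I [A]) = ps.
Proof.
  dl 0. rw Hpsi. tal 0. mg 0. rewrite HA_ul tm_id; clc. reflexivity.
Qed.

Lemma T : M \o tm (I [A]) sg \o tm ps (I [V]) \o tm (I [V]) (ps \o @tm _ [V] [V] [] [A] (I [V]) et) = sg.
Proof.
  dr 0. rwl Htw. tar 0. rewrite tm_id. mg 0. sp2 0. rewrite tm_nil_r; clc.
  rwl HN. exact HNs.
Qed.

Lemma L2 : N \o ps = ps.
Proof.
  rewrite HN.
  have E : tm (I [A;V]) et \o ps = tm ps (I [A]) \o tm (I [V;A]) et.
  { rewrite -(tm_split1 ps et) (tm_split2 ps et) tm_nil_r; clc. reflexivity. }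
  rw E. rw Hpsi. rewrite -(tm_id [V] [A]). tal 0. mg 0. rewrite HA_ur tm_id; clc. reflexivity.
Qed.

Lemma NN : N \o nu' = nu'.
Proof.
  rewrite HN.
  have E1 : tm (I [A;V]) et \o nu' = @tm _ [] [A;V] [A] [A] nu' (I [A]) \o et.
  { transitivity (tm nu' et).
    - rewrite (tm_split2 nu' et) tm_nil_r; clc. reflexivity.
    - rewrite (tm_split1 nu' et) tm_nil_l; clc. reflexivity. }
  rw E1. rw Hpre3.
  have E2 : @tm _ [A] [A] [] [A;V] (I [A]) nu' \o et = tm et (I [A;V]) \o nu'.
  { transitivity (tm et nu').
    - rewrite (tm_split2 et nu') tm_nil_r; clc. reflexivity.
    - rewrite (tm_split1 et nu') tm_nil_l; clc. reflexivity. }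
  rw E2. rewrite -(tm_id [A] [V]). tar 1. mg 1. rewrite HA_ul tm_id; clc. reflexivity.
Qed.

Lemma NF : N = M \o tm (I [A]) (ps \o @tm _ [V] [V] [] [A] (I [V]) et).
Proof. rewrite -NE. symmetry. exact L1'. Qed.

Lemma L1 : N \o M = M \o tm (I [A]) N.
Proof.
  rewrite NF. mg 0. symmetry. dr 0. rwl SS2. tar 0. rewrite tm_id. mg 0. reflexivity.
Qed.

Lemma NB : N \o M \o @tm _ [A] [A] [] [A;V] (I [A]) nu' = M \o @tm _ [A] [A] [] [A;V] (I [A]) nu'.
Proof. rw L1. mg 0. rewrite NN. reflexivity. Qed.

Local Notation MAV := (M \o tm mu sg \o tm (tm (I [A]) ps) (I [V])).
Local Notation ee := (ps \o @tm _ [V] [V] [] [A] (I [V]) et).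
Local Notation bb := (M \o @tm _ [A] [A] [] [A;V] (I [A]) nu').

Lemma G1 : MAV \o tm (I [A;V]) ee = M \o tm (I [A]) sg.
Proof.
  rw SS3. tal 1. rewrite -(tm_id [A] [V]). tal 0. mg 1. mg 0. rewrite T. reflexivity.
Qed.

Lemma PSTEP l (Z : Hm l [A;V]) : MAV \o tm ee Z = M \o tm (I [A]) sg \o tm ps (I [V]) \o tm (I [V]) Z.
Proof.
  sp1 0. rewrite -(tm_id [A] [V]). tar 1. mg 1. rw SS0. mg 1. rewrite P1. reflexivity.
Qed.

Lemma Sig' : MAV \o tm ee ee = sg.
Proof. rewrite PSTEP. exact T. Qed.

Lemma Psi' : MAV \o tm ee bb = ps.
Proof.
  rewrite PSTEP. dr 0. tar 1. mg 1. rewrite -Hpsi; clc. dl 1. dl 2.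
  rwl SS0. rw SS3. tal 2. mg 2.
  have E3 : tm (tm ps (I [A])) (I [V]) \o tm (I [V]) (@tm _ [A] [A] [] [A;V] (I [A]) nu')
     = tm (I [A]) (@tm _ [V] [V] [] [A;V] (I [V]) nu') \o ps.
  { transitivity (tm ps nu').
    - tal 1. tar 0. rewrite !tm_id. mg 0. reflexivity.
    - symmetry. rewrite (tm_split2 ps nu') tm_nil_r; clc. tar 1. rewrite tm_id. reflexivity. }
  rw E3. mg 1. rewrite Hpre1. rw L1'. exact L2.
Qed.

Lemma K' : MAV \o tm bb ee = N.
Proof.
  sp2 0. rw G1. dl 0. rwl SS0. rw SS3. tal 0. mg 0. rewrite Hpre2. exact L1'.
Qed.

Context (B : Ob C) (etaB : Hom unit B) (muB : Hom (tens B B) B)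
  (HBa : is_algebra etaB muB) (iA : Hom A B) (iV : Hom V B)
  (HiA : is_alg_morphism etaA muA etaB muB iA).
Let mB : Hm [B;B] [B] := muB.
Let eB : Hm [] [B] := etaB.
Let jA : Hm [A] [B] := iA.
Let jV : Hm [V] [B] := iV.

Lemma HalgB : mB \o tm mB (I [B]) = mB \o tm (I [B]) mB /\
  mB \o @tm _ [] [B] [B] [B] eB (I [B]) = I [B] /\ mB \o @tm _ [B] [B] [] [B] (I [B]) eB = I [B].
Proof.
  destruct HBa as [H1 [H2 H3]].
  split; [|split].
  - transl H1 (asci B B B).
  - transl H2 (lunit_i B).
  - transl H3 (runit_i B).
Qed.
Definition HB_as := proj1 HalgB.
Definition HB_ul := proj1 (proj2 HalgB).
Definition HB_ur := proj2 (proj2 HalgB).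

Lemma HjA_u : jA \o et = eB.
Proof. exact (proj1 HiA). Qed.
Lemma HjA_m : jA \o mu = mB \o tm jA jA.
Proof. unfold jA, mu, mB. rewrite tm_single. exact (proj2 HiA). Qed.

Local Notation F := (mB \o tm jA jV).

Lemma FM1 : F \o M = mB \o tm jA F.
Proof. mg 0. rewrite HjA_m. dl 0. rw HB_as. tal 0. mg 0. reflexivity. Qed.

Lemma Bsub1 : mB \o tm jV jA \o @tm _ [V] [V] [] [A] (I [V]) et = jV.
Proof.
  mg 0. rewrite HjA_u. sp2 0. rewrite tm_nil_r; clc. rewrite HB_ur; clc. reflexivity.
Qed.

Lemma FN (H2 : F \o ps = mB \o tm jV jA) : F \o N = F.
Proof.
  rewrite HN. rw FM1. mg 1. rewrite H2. rewrite -(tm_id [A] [V]). tal 0. mg 0.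
  rewrite Bsub1. reflexivity.
Qed.

Lemma Fb (H1 : F \o nu' = eB) : F \o bb = jA.
Proof.
  rw FM1. mg 0. rewrite H1. sp2 0. rewrite tm_nil_r; clc. rewrite HB_ur; clc. reflexivity.
Qed.

Lemma Fe : F \o @tm _ [] [A] [V] [V] et (I [V]) = jV.
Proof.
  mg 0. rewrite HjA_u. sp1 0. rewrite tm_nil_l. rw HB_ul. clc. reflexivity.
Qed.

Lemma FQ (H3 : F \o sg = mB \o tm jV jV) : F \o M \o tm (I [A]) sg = mB \o tm jA (mB \o tm jV jV).
Proof. rw FM1. mg 0. rewrite H3. reflexivity. Qed.

Lemma Bsub2 (H2 : F \o ps = mB \o tm jV jA) :
  mB \o tm jA (mB \o tm jV jV) \o tm ps (I [V]) = mB \o tm jV F.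
Proof.
  dr 1. rwl HB_as. tar 1. mg 1. mg 0. rewrite H2. dl 0. rw HB_as. tal 0. mg 0. reflexivity.
Qed.

Lemma FM (H2 : F \o ps = mB \o tm jV jA) (H3 : F \o sg = mB \o tm jV jV) :
  F \o MAV = mB \o tm F F.
Proof.
  rw SS3. rw FM1. mg 1. rewrite (FQ H3). tal 0. mg 0. rewrite (Bsub2 H2).
  symmetry. dl 0. rw HB_as. tal 0. mg 0. reflexivity.
Qed.

Context (AxV : Ob C) (iAV : Hom AxV (tens A V)) (pAV : Hom (tens A V) AxV)
  (Himg : splits (nabla etaA muA psi) iAV pAV).
Let ii : Hm [AxV] [A;V] := iAV.
Let pp : Hm [A;V] [AxV] := pAV.
Local Notation e0 := (@tm _ [] [A] [V] [V] et (I [V])).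

Lemma HNs' : N = ii \o pp.
Proof. unfold N; rewrite Nk_eq. exact (proj1 Himg). Qed.
Lemma Hpi : pp \o ii = I [AxV].
Proof. exact (proj2 Himg). Qed.
Lemma pN : pp \o N = pp.
Proof. rewrite HNs'. rw Hpi. clc. reflexivity. Qed.

Lemma TmuAV : comp (mu_AV muA psi sigma) (tensm iAV iAV) = MAV \o tm ii ii.
Proof. unfold mu_AV; rewrite ?tm_def; unfold tm0, asc, asci.
  rewrite ?tensm_sand_l ?tensm_sand_r ?tensm_ec_l ?tensm_ec_r; cnorm; cfin. Qed.
Lemma Te0 : comp (tensm etaA (idm V)) (lunit_i V) = e0.
Proof. rewrite ?tm_def; unfold tm0, lunit_i; cnorm; cfin. Qed.

Lemma KEY (om : Hm [AxV] [B]) (Hmul : om \o pp \o MAV \o tm ii ii = mB \o tm om om)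
  l1 l2 (X : Hm l1 [A;V]) (Y : Hm l2 [A;V]) :
  mB \o tm (om \o pp \o X) (om \o pp \o Y) = om \o pp \o MAV \o tm (N \o X) (N \o Y).
Proof.
  symmetry. rewrite HNs'.
  have E : tm (ii \o pp \o X) (ii \o pp \o Y) = tm ii ii \o tm (pp \o X) (pp \o Y).
  { rewrite tm_comp !comp_assoc. reflexivity. }
  rw E. rw Hmul. mg 0. reflexivity.
Qed.

Lemma FK (om : Hm [AxV] [B]) (Hmul : om \o pp \o MAV \o tm ii ii = mB \o tm om om)
  (Hb : om \o pp \o bb = jA) (He : om \o pp \o e0 = jV) : F = om \o pp.
Proof.
  rewrite -Hb -He (KEY om Hmul); clc. rewrite NB NE. rw K'. rw pN. reflexivity.
Qed.

Theorem main_iff :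
  (exists! omega : Hom AxV B,
      is_alg_morphism (comp pAV nu)
        (comp pAV (comp (mu_AV muA psi sigma) (tensm iAV iAV)))
        etaB muB omega /\
      comp omega (comp pAV (beta_nu muA nu)) = iA /\
      comp omega (comp pAV (comp (tensm etaA (idm V)) (lunit_i V))) = iV)
  <->
  (comp muB (comp (tensm iA iV) nu) = etaB /\
   comp muB (comp (tensm iA iV) psi) = comp muB (tensm iV iA) /\
   comp muB (comp (tensm iA iV) sigma) = comp muB (tensm iV iV)).
Proof.
  rewrite -(@tm_single C A B V B iA iV) -(@tm_single C V B A B iV iA) -(@tm_single C V B V B iV iV).
  split.
  - intros [om [[[Hu Hmul] [Hb He]] _]].
    rewrite TmuAV -(@tm_single C AxV B AxV B om om) in Hmul.
    rewrite Hbeta in Hb. rewrite Te0 in He.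
    do 2 rewrite comp_assoc in Hmul. rewrite comp_assoc in Hb.
    rewrite comp_assoc in He. rewrite comp_assoc in Hu.
    change (om \o pp \o bb = jA) in Hb. change (om \o pp \o e0 = jV) in He.
    change (om \o pp \o MAV \o tm ii ii = mB \o @tm _ [AxV] [B] [AxV] [B] om om) in Hmul.
    have FKe := FK om Hmul Hb He.
    split; [|split]; repeat rewrite comp_assoc.
    + change (F \o nu' = eB). rewrite FKe. exact Hu.
    + change (F \o ps = mB \o tm jV jA). rewrite FKe -Hb -He (KEY om Hmul); clc.
      rewrite NE NB. rw Psi'. reflexivity.
    + change (F \o sg = mB \o tm jV jV). rewrite FKe -He (KEY om Hmul); clc.
      rewrite NE. rw Sig'. reflexivity.
  - intros [H1 [H2 H3]].
    repeat rewrite comp_assoc in H1. repeat rewrite comp_assoc in H2. repeat rewrite comp_assoc in H3.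
    change (F \o nu' = eB) in H1. change (F \o ps = mB \o tm jV jA) in H2.
    change (F \o sg = mB \o tm jV jV) in H3.
    exists (F \o ii). split.
    + split; [split|split].
      * change (F \o ii \o (pp \o nu') = eB). clc. rwl HNs'. rw (FN H2). exact H1.
      * rewrite TmuAV -(@tm_single C AxV B AxV B (F \o ii) (F \o ii)).
        change (F \o ii \o (pp \o (MAV \o tm ii ii)) = mB \o tm (F \o ii) (F \o ii)). clc.
        rwl HNs'. rw (FN H2). rw (FM H2 H3). mg 0. reflexivity.
      * rewrite Hbeta. change (F \o ii \o (pp \o bb) = jA). clc.
        rwl HNs'. rw (FN H2). rw (Fb H1). reflexivity.
      * rewrite Te0. change (F \o ii \o (pp \o e0) = jV). clc.
        rwl HNs'. rw (FN H2). rw Fe. reflexivity.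
    + intros om [[Hu Hmul] [Hb He]].
      rewrite TmuAV -(@tm_single C AxV B AxV B om om) in Hmul.
      rewrite Hbeta in Hb. rewrite Te0 in He.
      do 2 rewrite comp_assoc in Hmul. rewrite comp_assoc in Hb.
      rewrite comp_assoc in He.
      change (om \o pp \o bb = jA) in Hb. change (om \o pp \o e0 = jV) in He.
      change (om \o pp \o MAV \o tm ii ii = mB \o @tm _ [AxV] [B] [AxV] [B] om om) in Hmul.
      rewrite (FK om Hmul Hb He). change (om \o pp \o ii = om). rw Hpi. clc. reflexivity.
Qed.

End Main.

Theorem theorem1p7 (C : SMCat) (Hsplit : idempotents_split C)
  (A V : Ob C) (etaA : Hom unit A) (muA : Hom (tens A A) A)
  (psi : Hom (tens V A) (tens A V)) (sigma : Hom (tens V V) (tens A V))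
  (nu : Hom unit (tens A V))
  (Hwcp : wcp_preunit etaA muA psi sigma nu)
  (AxV : Ob C) (iAV : Hom AxV (tens A V)) (pAV : Hom (tens A V) AxV)
  (Himg : splits (nabla etaA muA psi) iAV pAV)
  (B : Ob C) (etaB : Hom unit B) (muB : Hom (tens B B) B)
  (HB : is_algebra etaB muB)
  (iA : Hom A B) (iV : Hom V B)
  (HiA : is_alg_morphism etaA muA etaB muB iA) :
  (exists! omega : Hom AxV B,
      is_alg_morphism (comp pAV nu)
        (comp pAV (comp (mu_AV muA psi sigma) (tensm iAV iAV)))
        etaB muB omega /\
      comp omega (comp pAV (beta_nu muA nu)) = iA /\
      comp omega (comp pAV (comp (tensm etaA (idm V)) (lunit_i V))) = iV)
  <->
  (comp muB (comp (tensm iA iV) nu) = etaB /\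
   comp muB (comp (tensm iA iV) psi) = comp muB (tensm iV iA) /\
   comp muB (comp (tensm iA iV) sigma) = comp muB (tensm iV iV)).
Proof.
  apply main_iff; assumption.
Qed.
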